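(* Let $\Bbbk$ be an algebraically closed field and $A$ a local finite dimensional $\Bbbk$-algebra. Then $\operatorname{HHdim} T(A)=\infty$.
   Context: $T(A)=A\ltimes DA$ is the trivial extension: the vector space $A\oplus DA$, where $DA=\operatorname{Hom}_\Bbbk(A,\Bbbk)$ with its natural bimodule structure, with multiplication $(a,f)(b,g)=(ab,ag+fb)$. For a finite dimensional algebra $B$, $\operatorname{HH}_n(B)=\operatorname{Tor}^{B\otimes_\Bbbk B^{\mathrm{op}}}_n(B,B)$ is the $n$-th Hochschild homology group, and $\operatorname{HHdim}B=\sup\{n\mid \operatorname{HH}_n(B)\neq 0\}$. *)

(* Defs.v *)
From HB Require Import structures.
From mathcomp Require Import all_boot all_order all_algebra all_field.
Set Implicit Arguments. Unset Strict Implicit. Unset Printing Implicit Defensive.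
Import GRing.Theory.
Local Open Scope ring_scope.

(** A (unital, associative) ring is local when the sum of two non-units is a
    non-unit (equivalently: the non-units form the unique maximal ideal). *)
Definition local_ring (R : unitRingType) : Prop :=
  forall x y : R, x \notin GRing.unit -> y \notin GRing.unit ->
    (x + y) \notin GRing.unit.

Section Hochschild.
Variables (k : fieldType) (V : vectType k) (mul : V -> V -> V).

Definition hdim := \dim (fullv : {vspace V}).
Definition hbasis := vbasis (fullv : {vspace V}).

(** Basis tensors of V^{(x) (n+1)} are indexed by functions 'I_(n+1) -> 'I_d;
    the Hochschild chain group C_n(V) = V^{(x) (n+1)} is written in coordinates. *)
Definition htens (n : nat) := {ffun 'I_n.+1 -> 'I_hdim}.
Definition hchain (n : nat) := {ffun htens n -> k^o}.

Definition hprod (a b j : 'I_hdim) : k :=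
  coord hbasis j (mul hbasis`_a hbasis`_b).

(** i-th face (0 <= i <= n) of a basis tensor f of degree n+1:
    a_0 (x) .. (x) a_i a_(i+1) (x) .. (x) a_(n+1), coefficient at g *)
Definition hface (n : nat) (i : 'I_n.+1) (f : htens n.+1) (g : htens n) : k :=
  if [forall j : 'I_n.+1, ((j < i)%N ==> (g j == f (inord j)))
                        && ((i < j)%N ==> (g j == f (inord j.+1)))]
  then hprod (f (inord i)) (f (inord i.+1)) (g i) else 0.

(** last face: a_(n+1) a_0 (x) a_1 (x) .. (x) a_n, coefficient at g *)
Definition hcyc (n : nat) (f : htens n.+1) (g : htens n) : k :=
  if [forall j : 'I_n.+1, (0 < j)%N ==> (g j == f (inord j))]
  then hprod (f ord_max) (f ord0) (g ord0) else 0.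

Definition hbound_basis (n : nat) (f : htens n.+1) : hchain n :=
  [ffun g => \sum_(i < n.+1) (-1) ^+ i * hface i f g
             + (-1) ^+ n.+1 * hcyc f g].

Definition hbound (n : nat) : 'Hom(hchain n.+1, hchain n) :=
  linfun (fun c : hchain n.+1 => \sum_f c f *: hbound_basis f).

Definition HH_nonzero (n : nat) : bool :=
  match n with
  | 0 => limg (hbound 0) != fullv
  | m.+1 => ~~ (lker (hbound m) <= limg (hbound m.+1))%VS
  end.

Definition HHdim_infinite : Prop :=
  forall N : nat, exists2 n : nat, (N <= n)%N & HH_nonzero n.

End Hochschild.

Section TrivialExtension.
Variables (k : fieldType) (A : falgType k).

Definition dual_space := 'Hom(A, k^o).

Definition triv_ext := (A * dual_space)%type.

(** bimodule actions: (a.g)(x) = g(x a), (f.b)(x) = f(b x) *)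
Definition triv_ext_mul (u v : triv_ext) : triv_ext :=
  let: (a, f) := u in let: (b, g) := v in
  (a * b, linfun (fun x : A => (g (x * a) : k^o) + f (b * x))).

End TrivialExtension.

(* Main.v *)
Require Import Defs.
From HB Require Import structures.
From mathcomp Require Import all_boot all_order all_algebra all_field.
From Stdlib Require Import FunctionalExtensionality.
From mathcomp Require Import zify ring.
Set Implicit Arguments. Unset Strict Implicit. Unset Printing Implicit Defensive.
Import GRing.Theory.
Local Open Scope ring_scope.
Section Units.
Variables (k : fieldType) (A : falgType k).

Lemma unit_linv (x y : A) : y * x = 1 -> x \is a GRing.unit.
Proof.
move=> yx1.
have kx : lker (amull x) == 0%VS.
  by apply/lker0P => v w; rewrite !lfunE /= => e; rewrite -[v]mul1r -[w]mul1r -yx1 -!mulrA e.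
set r := ((amull x)^-1)%VF 1.
have xr : x * r = 1 by have := lker0_lfunVK kx 1; rewrite lfunE.
have ry : r = y by rewrite -[y]mulr1 -xr mulrA yx1 mul1r.
by apply/unitrP; exists r; split => //; rewrite ry.
Qed.

Lemma unit_rinv (x r : A) : x * r = 1 -> x \is a GRing.unit.
Proof.
move=> xr1.
have kx : lker (amulr x) == 0%VS.
  by apply/lker0P => v w; rewrite !lfunE /= => e; rewrite -[v]mulr1 -[w]mulr1 -xr1 !mulrA e.
set y := ((amulr x)^-1)%VF 1.
have yx : y * x = 1 by have := lker0_lfunVK kx 1; rewrite lfunE.
exact: (unit_linv yx).
Qed.

Lemma nonunitMl (a x : A) : x \notin GRing.unit -> a * x \notin GRing.unit.
Proof.
move=> nx; apply/negP => u; move/negP: nx; apply.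
by apply: (@unit_linv _ ((a * x)^-1 * a)); rewrite -mulrA mulVr.
Qed.

Lemma nonunitMr (a x : A) : x \notin GRing.unit -> x * a \notin GRing.unit.
Proof.
move=> nx; apply/negP => u; move/negP: nx; apply.
by apply: (@unit_rinv _ (a * (x * a)^-1)); rewrite mulrA divrr.
Qed.

Lemma scal_unit (c : k) : c != 0 -> (c%:A : A) \is a GRing.unit.
Proof.
move=> c0; apply: (@unit_linv _ (c^-1)%:A).
by rewrite -scalerAl mul1r scalerA mulVf // scale1r.
Qed.

End Units.
Section Eig.
Variables (k : closedFieldType) (A : falgType k).
Lemma exists_eig (a : A) : exists c : k, a - c%:A \notin GRing.unit.
Proof.
set f : 'End(A) := amulr a.
have dpos : (0 < \dim {:A})%N.
  rewrite lt0n dimv_eq0; apply/eqP => h.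
  have : (1 : A) \in fullv by rewrite memvf.
  by rewrite h memv0 oner_eq0.
set M := passmx.mxof (vbasis {:A}) (vbasis {:A}) f.
have : size (char_poly M) != 1%N by rewrite size_char_poly; case: (\dim {:A}) dpos.
case/closed_rootP => c rc.
exists c.
have ev : eigenvalue M c by rewrite eigenvalue_root_char.
have : passmx.leigenspace f c != 0%VS.
  rewrite (@passmx.leigenspaceE _ _ _ (vbasisP {:A})) ?passmx.vsof_eq0 //; exact: vbasisP.
move=> nz.
have v0 : vpick (passmx.leigenspace f c) != 0.
  by apply/negP => /eqP h; move: nz; rewrite -vpick0 h eqxx.
have := memv_pick (passmx.leigenspace f c); rewrite memv_ker !lfunE /= !lfunE /= => /eqP hv.
apply/negP => u; move/negP: v0; apply; apply/eqP.
apply: (mulIr u); rewrite mul0r mulrBr mulr_algr.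
by rewrite -hv lfunE /= id_lfunE.
Qed.
End Eig.

Section Chi.
Variables (k : closedFieldType) (A : falgType k).
Hypothesis Hloc : local_ring A.

Definition chi (a : A) : k := xchoose (exists_eig a).
Lemma chiP (a : A) : a - (chi a)%:A \notin GRing.unit.
Proof. exact: (xchooseP (exists_eig a)). Qed.

Lemma chi_uniq (a : A) c : a - c%:A \notin GRing.unit -> chi a = c.
Proof.
move=> h; have := Hloc h (nonunitMl (-1) (chiP a)).
rewrite mulN1r opprB addrC addrA subrK -scalerBl => h2.
apply/eqP; rewrite -subr_eq0; have [//|nz] := eqVneq (chi a - c) 0.
by case/negP: h2; apply: scal_unit.
Qed.

Lemma chi_nonunit (z : A) : z \notin GRing.unit -> chi z = 0.
Proof. by move=> h; apply: chi_uniq; rewrite scale0r subr0. Qed.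

Lemma chi_scal c : chi (c%:A) = c.
Proof. by apply: chi_uniq; rewrite subrr unitr0. Qed.

Lemma chiD a b : chi (a + b) = chi a + chi b.
Proof.
apply: chi_uniq; rewrite scalerDl.
have -> : a + b - ((chi a)%:A + (chi b)%:A) = (a - (chi a)%:A) + (b - (chi b)%:A).
  by rewrite opprD addrACA.
exact: Hloc (chiP a) (chiP b).
Qed.

Lemma chiM a b : chi (a * b) = chi a * chi b.
Proof.
apply: chi_uniq.
have -> : a * b - (chi a * chi b)%:A = (a - (chi a)%:A) * b + (chi a)%:A * (b - (chi b)%:A).
  by rewrite mulrBl mulrBr !mulr_algl scalerA addrA subrK.
exact: Hloc (nonunitMr _ (chiP a)) (nonunitMl _ (chiP b)).
Qed.

Lemma chiZ c a : chi (c *: a) = c * chi a.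
Proof. by rewrite -mulr_algl chiM chi_scal. Qed.

Lemma chi1 : chi 1 = 1.
Proof. by rewrite -(scale1r (1 : A)) chi_scal. Qed.

Lemma chi_unit (z : A) : chi z != 0 -> z \is a GRing.unit.
Proof. by apply: contraR => /chi_nonunit ->. Qed.

Definition Pm (x : A) : A := x - (chi x)%:A.

Lemma Pm_lin : linear Pm.
Proof.
move=> c x y; rewrite /Pm chiD chiZ scalerDl scalerBr -scalerA.
by rewrite opprD addrACA.
Qed.
HB.instance Definition _ := GRing.isLinear.Build k A A *:%R Pm Pm_lin.

Lemma chi_Pm x : chi (Pm x) = 0.
Proof. by rewrite /Pm chiD -scaleN1r chiZ chi_scal mulN1r subrr. Qed.

Lemma Pm_id x : chi x = 0 -> Pm x = x.
Proof. by rewrite /Pm => ->; rewrite scale0r subr0. Qed.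

Lemma one_sub_unit x : 1 - Pm x \is a GRing.unit.
Proof. by apply: chi_unit; rewrite chiD -scaleN1r chiZ chi_Pm chi1 mulr0 addr0 oner_eq0. Qed.

End Chi.

Section Socle.
Variables (k : closedFieldType) (A : falgType k).
Hypothesis Hloc : local_ring A.
Local Notation Pm := (@Pm k A).

Lemma Pm_mulr a x : Pm (a * Pm x) = a * Pm x.
Proof. by apply: Pm_id; rewrite (chiM Hloc) (chi_Pm Hloc) mulr0. Qed.
Lemma Pm_mull a x : Pm (Pm x * a) = Pm x * a.
Proof. by apply: Pm_id; rewrite (chiM Hloc) (chi_Pm Hloc) mul0r. Qed.

Lemma left_socle n (U : {vspace A}) : (\dim U <= n)%N -> U != 0%VS ->
  (forall a u, u \in U -> a * u \in U) -> exists2 y, y != 0 & forall x, Pm x * y = 0.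
Proof.
elim: n U => [|n IH] U dU nz hU.
  by move: nz; rewrite -dimv_eq0; move: dU; case: (\dim U).
set y := vpick U.
have yU : y \in U by exact: memv_pick.
have y0 : y != 0 by rewrite vpick0.
set L := (amulr y \o linfun Pm)%VF.
have LE x : L x = Pm x * y by rewrite comp_lfunE !lfunE.
have [W0|Wnz] := eqVneq (limg L) 0%VS.
  exists y => // x; rewrite -LE; apply/eqP; rewrite -memv0 -W0; exact: memv_img (memvf x).
apply: (IH (limg L)) => //; last first.
  move=> a _ /memv_imgP [x _ ->]; rewrite LE mulrA -Pm_mulr -LE; exact: memv_img (memvf _).
have sub : (limg L <= U)%VS by apply/subvP => _ /memv_imgP [x _ ->]; rewrite LE; exact: hU.
have : (\dim (limg L) < \dim U)%N.
  rewrite (ltn_leqif (dimv_leqif_eq sub)); apply/negP => /eqP e.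
  move: yU; rewrite -e => /memv_imgP [x _]; rewrite LE => e2.
  move/negP: y0; apply; apply/eqP; apply: (mulrI (one_sub_unit Hloc x)).
  by rewrite mulr0 mulrBl mul1r -e2 subrr.
by move=> h; rewrite -ltnS; exact: leq_trans h dU.
Qed.

Lemma right_socle n (U : {vspace A}) : (\dim U <= n)%N -> U != 0%VS ->
  (forall a u, u \in U -> u * a \in U) -> (forall x u, u \in U -> Pm x * u = 0) ->
  exists2 y, y != 0 & (forall x, Pm x * y = 0) /\ (forall x, y * Pm x = 0).
Proof.
elim: n U => [|n IH] U dU nz hU hI.
  by move: nz; rewrite -dimv_eq0; move: dU; case: (\dim U).
set y := vpick U.
have yU : y \in U by exact: memv_pick.
have y0 : y != 0 by rewrite vpick0.
set L := (amull y \o linfun Pm)%VF.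
have LE x : L x = y * Pm x by rewrite comp_lfunE !lfunE.
have [W0|Wnz] := eqVneq (limg L) 0%VS.
  exists y => //; split => [x|x]; first exact: hI.
  rewrite -LE; apply/eqP; rewrite -memv0 -W0; exact: memv_img (memvf x).
have sub : (limg L <= U)%VS by apply/subvP => _ /memv_imgP [x _ ->]; rewrite LE; exact: hU.
apply: (IH (limg L)) => //; first last.
- by move=> x u uW; apply: hI; exact: (subvP sub).
- move=> a _ /memv_imgP [x _ ->]; rewrite LE -mulrA -Pm_mull -LE; exact: memv_img (memvf _).
have : (\dim (limg L) < \dim U)%N.
  rewrite (ltn_leqif (dimv_leqif_eq sub)); apply/negP => /eqP e.
  move: yU; rewrite -e => /memv_imgP [x _]; rewrite LE => e2.
  move/negP: y0; apply; apply/eqP; apply: (mulIr (one_sub_unit Hloc x)).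
  by rewrite mul0r mulrBr mulr1 -e2 subrr.
by move=> h; rewrite -ltnS; exact: leq_trans h dU.
Qed.

Lemma socle_exists : exists2 s : A, s != 0 &
  forall a, a * s = chi a *: s /\ s * a = chi a *: s.
Proof.
have one_nz : (fullv : {vspace A}) != 0%VS.
  apply/negP => /eqP h; have : (1 : A) \in fullv by rewrite memvf.
  by rewrite h memv0 oner_eq0.
have [y0 y00 hy0] := left_socle (leqnn _) one_nz (fun a u _ => memvf (a * u)).
set U := limg (amull y0).
have UE v : amull y0 v = y0 * v by rewrite lfunE.
have y0U : y0 \in U by rewrite -[y0]mulr1 -UE; exact: memv_img (memvf _).
have Unz : U != 0%VS by apply/negP => /eqP h; move: y0U; rewrite h memv0; apply/negP.
have [s s0 [h1 h2]] := right_socle (leqnn _) Unz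
  (fun a u uU => ltac:(move/memv_imgP: uU => [v _ ->]; rewrite UE -mulrA -UE; exact: memv_img (memvf _)))
  (fun x u uU => ltac:(move/memv_imgP: uU => [v _ ->]; rewrite UE mulrA hy0 mul0r; done)).
exists s => // a.
have aE : a = Pm a + (chi a)%:A by rewrite /Pm subrK.
split; rewrite {1}aE.
  by rewrite (mulrDl (Pm a)) h1 add0r mulr_algl.
by rewrite (mulrDr s (Pm a)) h2 add0r mulr_algr.
Qed.
End Socle.

Section TE.
Variables (k : closedFieldType) (A : falgType k).
Local Notation T := (triv_ext A).
Local Notation tm := (@triv_ext_mul k A).

Lemma tmul_fst (u v : T) : (tm u v).1 = u.1 * v.1.
Proof. by case: u; case: v. Qed.

Lemma tmul_snd (u v : T) x : (tm u v).2 x = v.2 (x * u.1) + u.2 (v.1 * x).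
Proof.
case: u => a f; case: v => b g /=.
pose H : 'Hom(A, k^o) := ((g \o amulr a) + (f \o amull b))%VF.
have -> : (fun x : A => (g (x * a) : k^o) + f (b * x)) = fun_of_lfun H.
  apply: FunctionalExtensionality.functional_extensionality => y.
  by rewrite /H add_lfunE !comp_lfunE !lfunE.
by rewrite (fun_of_lfunK H) /H add_lfunE !comp_lfunE !lfunE.
Qed.

Lemma pairE (u v : T) : u.1 = v.1 -> u.2 = v.2 -> u = v.
Proof. by case: u; case: v => /= ? ? ? ? -> ->. Qed.

Lemma fstD (u v : T) : (u + v).1 = u.1 + v.1. Proof. by []. Qed.
Lemma sndD (u v : T) : (u + v).2 = u.2 + v.2. Proof. by []. Qed.
Lemma fstZ c (u : T) : (c *: u).1 = c *: u.1. Proof. by []. Qed.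
Lemma sndZ c (u : T) : (c *: u).2 = c *: u.2. Proof. by []. Qed.

Lemma tmulDl (c : k) (u u' v : T) : tm (c *: u + u') v = c *: tm u v + tm u' v.
Proof.
apply: pairE; first by rewrite fstD fstZ !tmul_fst fstD fstZ mulrDl scalerAl.
apply/lfunP => x; rewrite sndD sndZ add_lfunE scale_lfunE !tmul_snd.
rewrite fstD fstZ sndD sndZ add_lfunE scale_lfunE mulrDr linearD /= -scalerAr linearZ /=.
by rewrite scalerDr addrACA.
Qed.

Lemma tmulDr (c : k) (u v v' : T) : tm u (c *: v + v') = c *: tm u v + tm u v'.
Proof.
apply: pairE; first by rewrite fstD fstZ !tmul_fst fstD fstZ mulrDr scalerAr.
apply/lfunP => x; rewrite sndD sndZ add_lfunE scale_lfunE !tmul_snd.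
rewrite fstD fstZ sndD sndZ add_lfunE scale_lfunE mulrDl linearD /= -scalerAl linearZ /=.
by rewrite scalerDr addrACA.
Qed.

Lemma tm0l (v : T) : tm 0 v = 0.
Proof.
apply: pairE; first by rewrite tmul_fst mul0r.
by apply/lfunP => x; rewrite tmul_snd /= mulr0 linear0 zero_lfunE add0r zero_lfunE.
Qed.
Lemma tm0r (v : T) : tm v 0 = 0.
Proof.
apply: pairE; first by rewrite tmul_fst mulr0.
by apply/lfunP => x; rewrite tmul_snd /= mul0r linear0 zero_lfunE addr0 zero_lfunE.
Qed.

Lemma tm_suml (I : finType) (F : I -> k) (u : I -> T) v :
  tm (\sum_i F i *: u i) v = \sum_i F i *: tm (u i) v.
Proof.
apply: (big_ind2 (fun x y => tm x v = y)); first exact: tm0l.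
  by move=> x1 y1 x2 y2 <- <-; have := tmulDl 1 x1 x2 v; rewrite !scale1r.
by move=> i _; rewrite -[_ *: _]addr0 tmulDl tm0l addr0.
Qed.
Lemma tm_sumr (I : finType) (F : I -> k) (u : I -> T) v :
  tm v (\sum_i F i *: u i) = \sum_i F i *: tm v (u i).
Proof.
apply: (big_ind2 (fun x y => tm v x = y)); first exact: tm0r.
  by move=> x1 y1 x2 y2 <- <-; have := tmulDr 1 v x1 x2; rewrite !scale1r.
by move=> i _; rewrite -[_ *: _]addr0 tmulDr tm0r addr0.
Qed.
End TE.

Section TE2.
Variables (k : closedFieldType) (A : falgType k).
Local Notation T := (triv_ext A).
Local Notation tm := (@triv_ext_mul k A).
Variables (s : A) (hs : forall a, a * s = chi a *: s /\ s * a = chi a *: s).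

Definition lamT (u : T) : k := u.2 s.
Definition chiT (u : T) : k := chi u.1.

Lemma lamT_mul u v : lamT (tm u v) = chiT u * lamT v + lamT u * chiT v.
Proof.
rewrite /lamT /chiT tmul_snd (hs u.1).2 (hs v.1).1 !linearZ /=.
by rewrite [u.2 s * _]mulrC.
Qed.

Lemma lamT_lin (c : k) u v : lamT (c *: u + v) = c * lamT u + lamT v.
Proof. by rewrite /lamT sndD sndZ add_lfunE scale_lfunE. Qed.

Lemma lamT0 : lamT 0 = 0.
Proof. by rewrite /lamT zero_lfunE. Qed.

Lemma lamT_sum (I : finType) (F : I -> k) (u : I -> T) :
  lamT (\sum_i F i *: u i) = \sum_i F i * lamT (u i).
Proof.
apply: (big_ind2 (fun x y => lamT x = y)); first exact: lamT0.
  by move=> x1 y1 x2 y2 <- <-; have := lamT_lin 1 x1 x2; rewrite scale1r mul1r.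
by move=> i _; have := lamT_lin (F i) (u i) 0; rewrite addr0 lamT0 addr0.
Qed.

Variables (f0 : dual_space A) (hf0 : f0 s = 1).
Definition wT : T := (0, f0).
Lemma wT_sq : tm wT wT = 0.
Proof.
apply: pairE; first by rewrite tmul_fst mul0r.
by apply/lfunP => x; rewrite tmul_snd /= mulr0 mul0r linear0 addr0 zero_lfunE.
Qed.
Lemma lamT_w : lamT wT = 1.
Proof. exact: hf0. Qed.
End TE2.

Lemma sum_section (R : nmodType) (T P : finType) (pi : T -> P) (phi : P -> T)
  (H : T -> R) : (forall p, pi (phi p) = p) ->
  \sum_(t : T) (if t == phi (pi t) then H t else 0) = \sum_(p : P) H (phi p).
Proof.
move=> can.
have -> : \sum_(p : P) H (phi p) = \sum_p \sum_t (if t == phi p then H t else 0).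
  apply: eq_bigr => p _; rewrite -big_mkcond /=.
  by rewrite (big_pred1 (phi p)) // => t.
rewrite exchange_big /=; apply: eq_bigr => t _.
case: eqP => [e|ne].
  rewrite (bigD1 (pi t)) //= -e eqxx big1 ?addr0 // => p /negbTE np.
  case: eqP => // ep; by rewrite ep can eqxx in np.
by rewrite big1 // => p _; case: eqP => // ep; case: ne; rewrite {2}ep can.
Qed.

Section Comb.
Variables (k : fieldType) (V : vectType k) (mul : V -> V -> V).
Local Notation d := (hdim V).

Definition del n (i : 'I_n.+1) (f : htens V n.+1) (c : 'I_d) : htens V n :=
  [ffun j : 'I_n.+1 => if (j < i)%N then f (inord j) else if j == i then c else f (inord j.+1)].

Lemma del_i n i f c : @del n i f c i = c.
Proof. by rewrite ffunE ltnn eqxx. Qed.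

Lemma hface_del n (i : 'I_n.+1) f g : hface mul i f g =
  if g == del i f (g i) then hprod mul (f (inord i)) (f (inord i.+1)) (g i) else 0.
Proof.
rewrite /hface; congr (if _ then _ else _).
apply/forallP/eqP => [h|e j].
  apply/ffunP => j; rewrite ffunE; have /andP [h1 h2] := h j.
  case: (ltngtP j i) => [lt|gt|eq].
  - by apply/eqP; exact: (implyP h1).
  - have ji : (j == i) = false by apply/eqP => e; move: gt; rewrite e ltnn.
    by rewrite ji; apply/eqP; exact: (implyP h2).
  - by rewrite (_ : j = i) ?eqxx //; apply: val_inj.
have := congr1 (fun h : htens V n => h j) e; rewrite /= ffunE => ->.
apply/andP; split; apply/implyP => lt; first by rewrite lt.
have ji : (j == i) = false by apply/eqP => e2; move: lt; rewrite e2 ltnn.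
by rewrite ltnNge (ltnW lt) /= ji.
Qed.

Lemma sum_hface n (i : 'I_n.+1) f (H : htens V n -> k) :
  \sum_g hface mul i f g * H g =
  \sum_c hprod mul (f (inord i)) (f (inord i.+1)) c * H (del i f c).
Proof.
transitivity (\sum_(g : htens V n) (if g == del i f (g i) then hprod mul (f (inord i)) (f (inord i.+1)) (g i) * H g else 0)).
  by apply: eq_bigr => g _; rewrite hface_del; case: eqP => _ //; exact: mul0r.
rewrite (@sum_section k (htens V n) 'I_d (fun g : htens V n => g i) (del i f) (fun g => hprod mul (f (inord i)) (f (inord i.+1)) (g i) * H g)); last exact: del_i.
by apply: eq_bigr => c _; rewrite del_i.
Qed.

Definition delc n (f : htens V n.+1) (c : 'I_d) : htens V n :=
  [ffun j : 'I_n.+1 => if j == ord0 then c else f (inord j)].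

Lemma hcyc_delc n f g : @hcyc k V mul n f g =
  if g == delc f (g ord0) then hprod mul (f ord_max) (f ord0) (g ord0) else 0.
Proof.
rewrite /hcyc; congr (if _ then _ else _).
apply/forallP/eqP => [h|e j].
  apply/ffunP => j; rewrite ffunE; have h1 := h j.
  case: eqP => [->//|ne]; apply/eqP; apply: (implyP h1).
  by rewrite lt0n; apply/negP => /eqP e; apply: ne; apply: val_inj.
have := congr1 (fun h : htens V n => h j) e; rewrite /= ffunE => ->.
apply/implyP => lt; case: (j =P ord0) => [e2|_]; [by rewrite e2 in lt | by []].
Qed.

Lemma sum_hcyc n f (H : htens V n -> k) :
  \sum_g @hcyc k V mul n f g * H g =
  \sum_c hprod mul (f ord_max) (f ord0) c * H (delc f c).
Proof.
transitivity (\sum_(g : htens V n) (if g == delc f (g ord0) then hprod mul (f ord_max) (f ord0) (g ord0) * H g else 0)).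
  by apply: eq_bigr => g _; rewrite hcyc_delc; case: eqP => _ //; exact: mul0r.
rewrite (@sum_section k (htens V n) 'I_d (fun g : htens V n => g ord0) (delc f) (fun g => hprod mul (f ord_max) (f ord0) (g ord0) * H g)); last by move=> c; rewrite ffunE eqxx.
by apply: eq_bigr => c _; rewrite ffunE eqxx.
Qed.

Definition ins n (i : 'I_n.+1) (g : htens V n) (ab : 'I_d * 'I_d) : htens V n.+1 :=
  [ffun j : 'I_n.+2 => if (j < i)%N then g (inord j) else if (j == i :> nat) then ab.1
     else if (j == i.+1 :> nat) then ab.2 else g (inord j.-1)].

Lemma hface_ins n (i : 'I_n.+1) f g : hface mul i f g =
  if f == ins i g (f (inord i), f (inord i.+1))
  then hprod mul (f (inord i)) (f (inord i.+1)) (g i) else 0.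
Proof.
have iln := ltn_ord i.
rewrite /hface; congr (if _ then _ else _).
apply/forallP/eqP => [h|e j].
  apply/ffunP => j; rewrite ffunE; have jln := ltn_ord j.
  case: ifP => [lt|ge].
    have /andP [h1 _] := h (inord j); rewrite inordK in h1; last by lia.
    by rewrite inord_val in h1; move/implyP: h1 => /(_ lt) /eqP ->.
  case: ifP => [/eqP ei|ne].
    by congr (f _); apply: val_inj; rewrite /= inordK //; lia.
  case: ifP => [/eqP ei|ne1].
    by congr (f _); apply: val_inj; rewrite /= inordK //; lia.
  have /andP [_ h2] := h (inord j.-1); rewrite inordK in h2; last by lia.
  move/implyP: h2 => /(_ ltac:(lia)) /eqP ->; congr (f _); apply: val_inj.
  by rewrite /= inordK //; lia.
have jln := ltn_ord j.
apply/andP; split; apply/implyP => lt.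
  have := congr1 (fun h : htens V n.+1 => h (inord j)) e; rewrite /= ffunE inordK; last by lia.
  by rewrite lt inord_val => ->.
have := congr1 (fun h : htens V n.+1 => h (inord j.+1)) e; rewrite /= ffunE inordK; last by lia.
have -> : (j.+1 < i)%N = false by lia.
have -> : (j.+1 == i) = false by lia.
have -> : (j.+1 == i.+1) = false by lia.
by rewrite /= inord_val => ->.
Qed.

Lemma sum_hface_ins n (i : 'I_n.+1) g (H : htens V n.+1 -> k) :
  \sum_f H f * hface mul i f g =
  \sum_(ab : 'I_d * 'I_d) H (ins i g ab) * hprod mul ab.1 ab.2 (g i).
Proof.
have iln := ltn_ord i.
transitivity (\sum_(f : htens V n.+1) (if f == ins i g (f (inord i), f (inord i.+1)) then H f * hprod mul (f (inord i)) (f (inord i.+1)) (g i) else 0)).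
  by apply: eq_bigr => f _; rewrite hface_ins; case: eqP => _ //; exact: mulr0.
have can : forall ab, ((ins i g ab) (inord i), (ins i g ab) (inord i.+1)) = ab.
  move=> [a b]; rewrite !ffunE !inordK; try lia.
  by rewrite ltnn eqxx /= ltnNge leqnSn /= (_ : (i.+1 == i) = false) ?eqxx //; lia.
rewrite (@sum_section k (htens V n.+1) _ (fun f : htens V n.+1 => (f (inord i), f (inord i.+1))) (ins i g) (fun f => H f * hprod mul (f (inord i)) (f (inord i.+1)) (g i))) //.
by apply: eq_bigr => ab _; have := can ab; case: ab => a b [-> ->].
Qed.

Definition insc n (g : htens V n) (ab : 'I_d * 'I_d) : htens V n.+1 :=
  [ffun j : 'I_n.+2 => if j == ord0 then ab.2 else if j == ord_max then ab.1 else g (inord j)].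

Lemma hcyc_insc n f g : @hcyc k V mul n f g =
  if f == insc g (f ord_max, f ord0) then hprod mul (f ord_max) (f ord0) (g ord0) else 0.
Proof.
rewrite /hcyc; congr (if _ then _ else _).
apply/forallP/eqP => [h|e j].
  apply/ffunP => j; rewrite ffunE; have jln := ltn_ord j.
  case: (j =P ord0) => [->//|ne0]; case: (j =P ord_max) => [->//|nem].
  have jn : (j <= n)%N.
    suff : (j : nat) != n.+1 by lia.
    by apply/eqP => e; apply: nem; apply: val_inj.
  have j0 : (0 < j)%N.
    rewrite lt0n; apply/eqP => e; apply: ne0; by apply: val_inj.
  have := h (inord j); rewrite inordK // inord_val => /implyP /(_ j0) /eqP ->.
  done.
have jln := ltn_ord j.
apply/implyP => lt.
have := congr1 (fun h : htens V n.+1 => h (inord j)) e; rewrite /= ffunE.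
have -> : (inord j == ord0 :> 'I_n.+2) = false.
  by apply/eqP => e2; have := congr1 val e2; rewrite /= inordK //; lia.
have -> : (inord j == ord_max :> 'I_n.+2) = false.
  by apply/eqP => e2; have := congr1 val e2; rewrite /= inordK //; lia.
rewrite inordK; last by lia.
by rewrite inord_val => ->.
Qed.

Lemma sum_hcyc_insc n g (H : htens V n.+1 -> k) :
  \sum_f H f * @hcyc k V mul n f g =
  \sum_(ab : 'I_d * 'I_d) H (insc g ab) * hprod mul ab.1 ab.2 (g ord0).
Proof.
transitivity (\sum_(f : htens V n.+1) (if f == insc g (f ord_max, f ord0) then H f * hprod mul (f ord_max) (f ord0) (g ord0) else 0)).
  by apply: eq_bigr => f _; rewrite hcyc_insc; case: eqP => _ //; exact: mulr0.
have can : forall ab, ((insc g ab) ord_max, (insc g ab) ord0) = ab.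
  by move=> [a b]; rewrite !ffunE eqxx.
rewrite (@sum_section k (htens V n.+1) _ (fun f : htens V n.+1 => (f ord_max, f ord0)) (insc g) (fun f => H f * hprod mul (f ord_max) (f ord0) (g ord0))) //.
by apply: eq_bigr => ab _; have := can ab; case: ab => a b [-> ->].
Qed.
End Comb.

Section HB.
Variables (k : fieldType) (V : vectType k) (mul : V -> V -> V).
Local Notation d := (hdim V).

Definition hbfun n (x : hchain V n.+1) : hchain V n := \sum_f x f *: hbound_basis mul f.
Lemma hbfun_lin n : linear (@hbfun n).
Proof.
move=> c x y; rewrite /hbfun scaler_sumr -big_split /=; apply: eq_bigr => f _.
by rewrite !ffunE scalerDl scalerA.
Qed.
HB.instance Definition _ n := GRing.isLinear.Build k (hchain V n.+1) (hchain V n) *:%R (@hbfun n) (@hbfun_lin n).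

Lemma hboundE n x g : hbound mul n x g =
  \sum_f x f * (\sum_(i < n.+1) (-1) ^+ i * hface mul i f g + (-1) ^+ n.+1 * hcyc mul f g).
Proof.
have -> : hbound mul n = linfun (@hbfun n) by [].
rewrite lfunE /hbfun sum_ffunE; apply: eq_bigr => f _.
by rewrite ffunE ffunE.
Qed.

Lemma prod2 m (F : 'I_m -> k) p q : p != q ->
  \prod_j F j = F p * F q * \prod_(j | (j != p) && (j != q)) F j.
Proof.
move=> pq; rewrite (bigD1 p) //= (bigD1 q) //= 1?eq_sym //.
rewrite mulrA; congr (_ * _); apply: eq_bigl => j; by rewrite andbC.
Qed.

Variable W : 'I_d -> k.
Hypothesis Hww : forall c, \sum_(ab : 'I_d * 'I_d) W ab.1 * W ab.2 * hprod mul ab.1 ab.2 c = 0.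
Definition zch n : hchain V n := [ffun t : htens V n => \prod_j W (t j)].

Lemma zch_face n (i : 'I_n.+1) g : \sum_(f : htens V n.+1) (\prod_j W (f j)) * hface mul i f g = 0.
Proof.
have iln := ltn_ord i.
rewrite sum_hface_ins.
have pq : (inord i : 'I_n.+2) != inord i.+1.
  by apply/eqP => e; have := congr1 val e; rewrite /= !inordK //; lia.
set R := \prod_(j | (j != inord i) && (j != inord i.+1)) W (ins i g (g i, g i) j).
transitivity (R * \sum_(ab : 'I_d * 'I_d) W ab.1 * W ab.2 * hprod mul ab.1 ab.2 (g i)); last by rewrite Hww mulr0.
rewrite mulr_sumr; apply: eq_bigr => ab _.
rewrite (prod2 _ pq) !ffunE !inordK; try lia.
rewrite ltnn eqxx /= ltnNge leqnSn /= (_ : (i.+1 == i) = false) ?eqxx; last by lia.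
rewrite [R * _]mulrC -!mulrA; congr (_ * (_ * _)); rewrite mulrC; congr (_ * _).
apply: eq_bigr => j /andP [ji ji1]; rewrite !ffunE.
have -> : (j == i :> nat) = false.
  by apply/negbTE; apply: contra ji => /eqP e; apply/eqP/val_inj; rewrite /= inordK //; lia.
have -> : (j == i.+1 :> nat) = false.
  by apply/negbTE; apply: contra ji1 => /eqP e; apply/eqP/val_inj; rewrite /= inordK //; lia.
by [].
Qed.

Lemma zch_cyc n g : \sum_(f : htens V n.+1) (\prod_j W (f j)) * hcyc mul f g = 0.
Proof.
rewrite sum_hcyc_insc.
have pq : (ord_max : 'I_n.+2) != ord0 by [].
set R := \prod_(j | (j != ord_max) && (j != ord0)) W (insc g (g ord0, g ord0) j).
transitivity (R * \sum_(ab : 'I_d * 'I_d) W ab.1 * W ab.2 * hprod mul ab.1 ab.2 (g ord0)); last by rewrite Hww mulr0.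
rewrite mulr_sumr; apply: eq_bigr => ab _.
rewrite (prod2 _ pq) !ffunE eqxx /=.
rewrite [R * _]mulrC -!mulrA; congr (_ * (_ * _)); rewrite mulrC; congr (_ * _).
apply: eq_bigr => j /andP [ji ji1]; rewrite !ffunE.
by rewrite (negbTE ji) (negbTE ji1).
Qed.

Lemma zch_cycle n : hbound mul n (zch n.+1) = 0.
Proof.
apply/ffunP => g; rewrite hboundE ffunE.
under eq_bigr => f _ do rewrite ffunE mulrDr mulr_sumr.
rewrite big_split /= exchange_big /= big1 ?add0r.
  under eq_bigr => f _ do rewrite mulrCA.
  by rewrite -mulr_sumr zch_cyc mulr0.
move=> i _; under eq_bigr => f _ do rewrite mulrCA.
by rewrite -mulr_sumr zch_face mulr0.
Qed.
End HB.

Section Cocycle.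
Variables (k : fieldType) (V : vectType k) (mul : V -> V -> V).
Local Notation d := (hdim V).
Variables (Lam Chi : 'I_d -> k).
Hypothesis Hder : forall a b, \sum_c hprod mul a b c * Lam c = Chi a * Lam b + Lam a * Chi b.

Definition Phi n (x : hchain V n) : k := \sum_(t : htens V n) x t * \prod_j Lam (t j).

Lemma prod_ord_nat m (G : 'I_m.+1 -> k) : \prod_(j < m.+1) G j = \prod_(0 <= q < m.+1) G (inord q).
Proof. by rewrite big_mkord; apply: eq_bigr => j _; rewrite inord_val. Qed.

Section FixF.
Variables (n : nat) (f : htens V n.+2).
Definition Fq q := Lam (f (inord q)).
Definition Pr a b := \prod_(a <= q < b) Fq q.

Lemma prod_del (i : 'I_n.+2) c :
  \prod_j Lam (del i f c j) = Pr 0 i * Lam c * Pr i.+2 n.+3.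
Proof.
have iln := ltn_ord i.
rewrite prod_ord_nat (big_cat_nat _ (n := i)) //=; last by lia.
rewrite (big_ltn (m := i)) //= mulrA; congr (_ * _ * _).
- apply: eq_big_nat => q /andP [_ qi]; rewrite ffunE inordK; last by lia.
  by rewrite qi.
- rewrite ffunE inordK; last by lia.
  by rewrite ltnn (_ : inord i = i) ?eqxx // inord_val.
- rewrite /Pr (_ : i.+2 = i.+1 + 1)%N; last by lia.
  rewrite big_addn (_ : (n.+3 - 1 = n.+2)%N); last by lia.
  apply: eq_big_nat => q /andP [iq qn]; rewrite ffunE inordK; last by lia.
  have -> : (q < i)%N = false by lia.
  have -> : (inord q == i) = false.
    by apply/negbTE/eqP => e; have := congr1 val e; rewrite /= inordK; lia.
  by rewrite /Fq addn1.
Qed.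

Lemma prod_delc c : \prod_j Lam (delc f c j) = Lam c * Pr 1 n.+2.
Proof.
rewrite prod_ord_nat (big_ltn (m := 0)) //=; congr (_ * _).
  by rewrite ffunE (_ : inord 0 = ord0) ?eqxx //; apply: val_inj; rewrite /= inordK.
apply: eq_big_nat => q /andP [q0 qn]; rewrite ffunE.
have -> : (inord q == ord0 :> 'I_n.+2) = false.
  by apply/negbTE/eqP => e; have := congr1 val e; rewrite /= inordK; lia.
by rewrite /Fq inordK //; lia.
Qed.

Definition Tp p := Pr 0 p * Chi (f (inord p)) * Pr p.+1 n.+3.

Lemma face_sum (i : 'I_n.+2) :
  \sum_(t : htens V n.+1) hface mul i f t * \prod_j Lam (t j) = Tp i + Tp i.+1.
Proof.
have iln := ltn_ord i.
rewrite sum_hface; under eq_bigr => c _ do rewrite prod_del.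
transitivity (Pr 0 i * Pr i.+2 n.+3 * \sum_c hprod mul (f (inord i)) (f (inord i.+1)) c * Lam c).
  rewrite mulr_sumr; apply: eq_bigr => c _; ring.
have h1 : Pr i.+1 n.+3 = Fq i.+1 * Pr i.+2 n.+3 by rewrite /Pr big_ltn //; lia.
have h2 : Pr 0 i.+1 = Pr 0 i * Fq i by rewrite /Pr big_nat_recr.
rewrite Hder /Tp h1 h2 /Fq; ring.
Qed.

Lemma cyc_sum :
  \sum_(t : htens V n.+1) hcyc mul f t * \prod_j Lam (t j) = Tp n.+2 + Tp 0.
Proof.
rewrite sum_hcyc; under eq_bigr => c _ do rewrite prod_delc.
transitivity (Pr 1 n.+2 * \sum_c hprod mul (f ord_max) (f ord0) c * Lam c).
  rewrite mulr_sumr; apply: eq_bigr => c _; ring.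
have e0 : f (inord 0) = f ord0 by congr (f _); apply: val_inj; rewrite /= inordK.
have em : f (inord n.+2) = f ord_max by congr (f _); apply: val_inj; rewrite /= inordK.
have h1 : Pr 0 0 = 1 by rewrite /Pr big_geq.
have h2 : Pr n.+3 n.+3 = 1 by rewrite /Pr big_geq.
have h3 : Pr 0 n.+2 = Fq 0 * Pr 1 n.+2 by rewrite /Pr big_ltn.
have h4 : Pr 1 n.+3 = Pr 1 n.+2 * Fq n.+2 by rewrite /Pr big_nat_recr.
rewrite Hder /Tp h1 h2 h3 h4 /Fq e0 em; ring.
Qed.

Lemma telescope (K : nat) :
  \sum_(i < K) (-1) ^+ i * (Tp i + Tp i.+1) = Tp 0 - (-1) ^+ K * Tp K.
Proof.
elim: K => [|K IH]; first by rewrite big_ord0 expr0 mul1r subrr.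
rewrite big_ord_recr /= IH exprS; ring.
Qed.

Lemma basis_cocycle : odd n ->
  \sum_(t : htens V n.+1) hbound_basis mul f t * \prod_j Lam (t j) = 0.
Proof.
move=> on.
under eq_bigr => t _ do rewrite ffunE mulrDl mulr_suml.
rewrite big_split /= exchange_big /=.
under eq_bigr => i _ do (under eq_bigr => t _ do rewrite -mulrA; rewrite -mulr_sumr face_sum).
under [X in _ + X]eq_bigr => t _ do rewrite -mulrA.
rewrite -mulr_sumr cyc_sum.
rewrite (telescope n.+2) -signr_odd /= on /= expr1; ring.
Qed.
End FixF.

Lemma Phi_bound n y : odd n -> Phi (hbound mul n.+1 y) = 0.
Proof.
move=> on; rewrite /Phi.
under eq_bigr => t _ do rewrite hboundE mulr_suml.
rewrite exchange_big /= big1 // => f _.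
under eq_bigr => t _ do rewrite -mulrA.
rewrite -mulr_sumr.
have := basis_cocycle f on.
under eq_bigr => t _ do rewrite ffunE.
by move=> ->; rewrite mulr0.
Qed.
End Cocycle.

Lemma Phi_zch (k : fieldType) (V : vectType k) (Lam W : 'I_(hdim V) -> k) n :
  Phi Lam (zch W n) = (\sum_a W a * Lam a) ^+ n.+1.
Proof.
rewrite /Phi; under eq_bigr => t _ do rewrite ffunE -big_split.
by rewrite -(bigA_distr_bigA (fun (i : 'I_n.+1) a => W a * Lam a)) /= prodr_const card_ord.
Qed.

Lemma dual_exists (k : fieldType) (A : vectType k) (s : A) : s != 0 ->
  exists f0 : 'Hom(A, k^o), f0 s = 1.
Proof.
move=> s0.
have [i hi] : exists i, coord (vbasis fullv) i s != 0.
  case: (boolP [exists i, coord (vbasis fullv) i s != 0]) => [/existsP //|/existsPn h].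
  case/negP: s0; apply/eqP; rewrite (coord_vbasis (memvf s)) big1 // => i _.
  by move: (h i); rewrite negbK => /eqP ->; rewrite scale0r.
exists ((coord (vbasis fullv) i s)^-1 *: linfun (coord (vbasis fullv) i : A -> k^o)).
by rewrite scale_lfunE lfunE /= [_ *: _]mulVf.
Qed.

Theorem theorem3p2 (k : closedFieldType) (A : falgType k) :
  local_ring A ->
  HHdim_infinite (@triv_ext_mul k A).
Proof.
move=> Hloc N.
have [s s0 hs] := socle_exists Hloc.
have [f0 hf0] := dual_exists s0.
set V := triv_ext A.
set mul := @triv_ext_mul k A.
set e := hbasis V.
set Lam : 'I_(hdim V) -> k := fun a => lamT s e`_a.
set Chi : 'I_(hdim V) -> k := fun a => chiT e`_a.
set W : 'I_(hdim V) -> k := fun a => coord e a (wT f0).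
have lam_exp (v : V) : lamT s v = \sum_c coord e c v * Lam c.
  by rewrite {1}(coord_vbasis (memvf v)) lamT_sum.
have Hder : forall a b, \sum_c hprod mul a b c * Lam c = Chi a * Lam b + Lam a * Chi b.
  by move=> a b; rewrite /hprod -lam_exp lamT_mul.
have Hww : forall c, \sum_(ab : 'I_(hdim V) * 'I_(hdim V)) W ab.1 * W ab.2 * hprod mul ab.1 ab.2 c = 0.
  move=> c; rewrite -(pair_big xpredT xpredT (fun a b => W a * W b * hprod mul a b c)) /=.
  have : coord e c (mul (wT f0) (wT f0)) = 0 by rewrite /mul wT_sq linear0.
  rewrite {1 2}(coord_vbasis (memvf (wT f0))) /mul tm_sumr.
  rewrite (eq_bigr (fun b => coord (vbasis fullv) b (wT f0) *: \sum_a coord (vbasis fullv) a (wT f0) *: triv_ext_mul (vbasis fullv)`_a (vbasis fullv)`_b)); last by move=> b _; rewrite tm_suml.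
  move=> h; rewrite -[RHS]h linear_sum exchange_big; apply: eq_bigr => b _.
  rewrite linearZ linear_sum /= mulr_sumr; apply: eq_bigr => a _.
  by rewrite linearZ /= mulrCA mulrA.
have lamw : \sum_a W a * Lam a = 1 by rewrite -lam_exp lamT_w.
exists (N.*2).+2; first by rewrite -addn2 -addnn; apply: leq_trans (leq_addr _ _) (leq_addr _ _).
rewrite /HH_nonzero; apply/negP => sub.
have zker : zch W (N.*2).+2 \in lker (hbound mul (N.*2).+1).
  by rewrite memv_ker zch_cycle.
have := subvP sub _ zker; case/memv_imgP => y _ ey.
have : Phi Lam (zch W (N.*2).+2) = 1 by rewrite Phi_zch lamw expr1n.
rewrite ey (Phi_bound (Chi := Chi)) //; last by rewrite /= odd_double.
by move/eqP; rewrite eq_sym oner_eq0.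
Qed.
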